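(* Let $X$ be a space with $\omega\subseteq X\subseteq \beta\omega$ (subspace topology), and let $p$ be a free ultrafilter on $\omega$. Let $(C_n:n\in\omega)$ be a sequence of nonempty, finite, pairwise disjoint subsets of $\omega$, let $\mathcal G=\{g\in\omega^\omega: g(n)\in C_n \text{ for all } n\in\omega\}$, and let $Z_p=\{p\text{-}\lim g: g\in\mathcal G\}$, where the $p$-limits are taken in $\beta\omega$. Regarding each $C_n$ as a point of $\operatorname{CL}(X)$, the following are equivalent: (1) the sequence $(C_n:n\in\omega)$ has a $p$-limit in $\operatorname{CL}(X)$; (2) $\operatorname{cl}_X Z_p$ is the $p$-limit of $(C_n:n\in\omega)$ in $\operatorname{CL}(X)$; (3) $Z_p\subseteq X$. Moreover, if $|C_n|\le |C_{n+1}|$ for every $n\in\omega$ and $|C_n|\to\infty$, then $|Z_p|=\mathfrak c$.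
   Context: $\beta\omega$ is the Stone–Čech compactification of the discrete space $\omega$, identified with the set of ultrafilters on $\omega$ (points of $\omega$ being the principal ultrafilters); $\omega^*=\beta\omega\setminus\omega$ is the set of free ultrafilters. For a space $Y$, $\operatorname{CL}(Y)$ is the set of nonempty closed subsets of $Y$ with the Vietoris topology, generated by the sets $A^+=\{F\in\operatorname{CL}(Y):F\subseteq A\}$ and $A^-=\{F\in\operatorname{CL}(Y):F\cap A\neq\emptyset\}$ for $A\subseteq Y$ open. For $p\in\omega^*$ and a sequence $(y_n:n\in\omega)$ of points of a space $Y$, a point $y\in Y$ is a $p$-limit of the sequence ($y=p\text{-}\lim y_n$) if $\{n\in\omega: y_n\in W\}\in p$ for every neighborhood $W$ of $y$. *)

(* Defs.v *)
From mathcomp Require Import all_boot.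
From mathcomp Require Import boolp classical_sets cardinality.
Set Implicit Arguments. Unset Strict Implicit. Unset Printing Implicit Defensive.
Local Open Scope classical_set_scope.

(* A point of beta omega is an ultrafilter U : set (set nat) on nat. *)
Definition ultrafilter_on_nat (U : set (set nat)) : Prop :=
  [/\ U setT, ~ U set0,
      (forall A B, U A -> U B -> U (A `&` B)),
      (forall A B, A `<=` B -> U A -> U B) &
      (forall A, U A \/ U (~` A))].

Definition BW : set (set (set nat)) := ultrafilter_on_nat.

(* The principal ultrafilter at n: the point n of omega inside beta omega. *)
Definition pu (n : nat) : set (set nat) := [set A | A n].

Definition free_ultrafilter (p : set (set nat)) : Prop :=
  ultrafilter_on_nat p /\ ~ (exists n, p = pu n).

Definition bw_open (O : set (set (set nat))) : Prop :=
  O `<=` BW /\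
  forall U, O U -> exists A, U A /\ (forall V, BW V -> V A -> O V).

Definition bw_nbhd (y : set (set nat)) (W : set (set (set nat))) : Prop :=
  exists O, bw_open O /\ O y /\ O `<=` W.

Definition bw_plim (p : set (set nat)) (ys : nat -> set (set nat))
  (y : set (set nat)) : Prop :=
  BW y /\ forall W, bw_nbhd y W -> p [set n | W (ys n)].

Definition bw_closure (Z : set (set (set nat))) : set (set (set nat)) :=
  [set y | BW y /\ forall O, bw_open O -> O y -> exists z, Z z /\ O z].

Definition open_in (X : set (set (set nat))) (W : set (set (set nat))) : Prop :=
  exists O, bw_open O /\ W = O `&` X.

Definition closed_in (X : set (set (set nat))) (F : set (set (set nat))) : Prop :=
  F `<=` X /\ open_in X (X `\` F).

Definition closure_in (X Z : set (set (set nat))) : set (set (set nat)) :=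
  bw_closure Z `&` X.

Definition CL (X : set (set (set nat))) : set (set (set (set nat))) :=
  [set F | closed_in X F /\ F !=set0].

Definition vplus (X A : set (set (set nat))) : set (set (set (set nat))) :=
  [set F | CL X F /\ F `<=` A].
Definition vminus (X A : set (set (set nat))) : set (set (set (set nat))) :=
  [set F | CL X F /\ F `&` A !=set0].

Definition vietoris_subbasic (X : set (set (set nat)))
  (S : set (set (set (set nat)))) : Prop :=
  exists A, open_in X A /\ (S = vplus X A \/ S = vminus X A).

Definition vietoris_open (X : set (set (set nat)))
  (O : set (set (set (set nat)))) : Prop :=
  O `<=` CL X /\
  forall F, O F -> exists (k : nat) (Ss : nat -> set (set (set (set nat)))),
    (forall i, (i < k)%N -> vietoris_subbasic X (Ss i) /\ Ss i F) /\
    (forall G, CL X G -> (forall i, (i < k)%N -> Ss i G) -> O G).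

Definition vietoris_nbhd (X : set (set (set nat))) (F : set (set (set nat)))
  (N : set (set (set (set nat)))) : Prop :=
  exists O, vietoris_open X O /\ O F /\ O `<=` N.

Definition CL_plim (X : set (set (set nat))) (p : set (set nat))
  (Fs : nat -> set (set (set nat))) (F : set (set (set nat))) : Prop :=
  CL X F /\ forall N, vietoris_nbhd X F N -> p [set n | N (Fs n)].

Definition as_bw (C : set nat) : set (set (set nat)) :=
  [set y | exists k, C k /\ y = pu k].

Definition Zp (p : set (set nat)) (C : nat -> set nat) : set (set (set nat)) :=
  [set y | exists g : nat -> nat, (forall n, C n (g n)) /\
                                  bw_plim p (fun n => pu (g n)) y].

(* Main.v *)
Require Import Defs.
From mathcomp Require Import all_boot.
From mathcomp Require Import boolp classical_sets cardinality.
From mathcomp Require Import zify finmap functions.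
Local Open Scope classical_set_scope.
Local Open Scope card_scope.
Set Implicit Arguments. Unset Strict Implicit.

Definition star (A : set nat) : set (set (set nat)) := [set V | BW V /\ V A].
Definition ghat (p : set (set nat)) (g : nat -> nat) : set (set nat) :=
  [set A | p [set n | A (g n)]].

Section UF.
Variable U : set (set nat).
Hypothesis HU : ultrafilter_on_nat U.
Lemma uf_T : U setT. Proof. by case: HU. Qed.
Lemma uf_0 : ~ U set0. Proof. by case: HU. Qed.
Lemma uf_I A B : U A -> U B -> U (A `&` B). Proof. by case: HU => _ _ H _ _; apply: H. Qed.
Lemma uf_S A B : A `<=` B -> U A -> U B. Proof. by case: HU => _ _ _ H _; apply: H. Qed.
Lemma uf_C A : U A \/ U (~` A). Proof. by case: HU. Qed.
Lemma uf_ne A : U A -> exists n, A n.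
Proof.
move=> UA; case: (pselect (exists n, A n)) => // h; exfalso; apply: uf_0.
by apply: uf_S UA => n An; apply: h; exists n.
Qed.
Lemma uf_nC A : U A -> ~ U (~` A).
Proof. by move=> h1 h2; have [n []] := uf_ne (uf_I h1 h2). Qed.
End UF.

Lemma uf_eq x z : ultrafilter_on_nat x -> ultrafilter_on_nat z -> x `<=` z -> x = z.
Proof.
move=> hx hz sub; apply/seteqP; split => // A zA.
case: (uf_C hx A) => // /sub h; exfalso; exact: (uf_nC hz zA h).
Qed.

Lemma star_open A : bw_open (star A).
Proof. rewrite /bw_open; split; first by move=> V []. by move=> V [_ VA]; exists A; split => // W. Qed.

Lemma pu_BW k : BW (pu k).
Proof.
rewrite /BW /ultrafilter_on_nat /pu; split.
- by [].
- by [].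
- by move=> A B /= ??; split.
- by move=> A B AB /=; apply: AB.
- by move=> A /=; case: (pselect (A k)) => h; [left|right].
Qed.

Lemma ghat_BW p g : ultrafilter_on_nat p -> BW (ghat p g).
Proof.
move=> hp; rewrite /BW /ultrafilter_on_nat /ghat /=; split.
- exact: (uf_T hp).
- exact: (uf_0 hp).
- by move=> A B; apply: (uf_I hp).
- by move=> A B AB; apply: (uf_S hp) => n /AB.
- by move=> A; apply: (uf_C hp).
Qed.

Lemma ghat_plim p g : ultrafilter_on_nat p -> bw_plim p (fun n => pu (g n)) (ghat p g).
Proof.
move=> hp; split; first exact: ghat_BW.
move=> W [O [[_ Oop] [Oy OW]]]; have [A [yA HA]] := Oop _ Oy.
by apply: (uf_S hp _ yA) => n An; apply: OW; apply: HA => //; apply: pu_BW.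
Qed.

Lemma plim_uniq p g y : ultrafilter_on_nat p ->
  bw_plim p (fun n => pu (g n)) y -> y = ghat p g.
Proof.
move=> hp [hy Hl]; apply/seteqP; split => A.
- move=> yA; have := Hl (star A).
  have hn : bw_nbhd y (star A).
    by exists (star A); split; [exact: star_open| split].
  by move=> /(_ hn); apply: (uf_S hp) => n [].
- move=> gA; case: (uf_C hy A) => // ynA; exfalso.
  have := Hl (star (~` A)).
  have hn : bw_nbhd y (star (~` A)).
    by exists (star (~` A)); split; [exact: star_open| split].
  move=> /(_ hn) h; apply: (uf_nC hp gA); apply: (uf_S hp _ h) => n [].
  by rewrite /pu.
Qed.

Lemma ZpP p C y : ultrafilter_on_nat p ->
  Zp p C y <-> exists g, (forall n, C n (g n)) /\ y = ghat p g.
Proof.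
move=> hp; split.
- by move=> [g [Cg hl]]; exists g; split => //; apply: plim_uniq.
- by move=> [g [Cg ->]]; exists g; split => //; apply: ghat_plim.
Qed.

Lemma ufin U N : ultrafilter_on_nat U -> forall A, U A -> A `<=` `I_N ->
  exists k, A k /\ U = pu k.
Proof.
move=> hU; elim: N => [|N IH] A UA AN.
  by exfalso; have [n /AN] := uf_ne hU UA.
case: (uf_C hU [set N]) => h.
- have AN' : A N.
    case: (pselect (A N)) => // nA; exfalso.
    have [n [An /= nN]] := uf_ne hU (uf_I hU UA h).
    by apply: nA; rewrite -nN.
  exists N; split => //; apply/seteqP; split => B /=.
  + move=> UB; case: (pselect (B N)) => // nB; exfalso.
    have [n [Bn /= nN]] := uf_ne hU (uf_I hU UB h).
    by apply: nB; rewrite -nN.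
  + by move=> BN; apply: (uf_S hU _ h) => n /= ->.
- have h2 : A `&` ~` [set N] `<=` `I_N.
    by move=> n [/AN /= nN nn]; rewrite /= in nn; lia.
  have [k [[Ak _] Uk]] := IH (A `&` ~` [set N]) (uf_I hU UA h) h2.
  by exists k.
Qed.

Lemma finite_bound (A : set nat) : finite_set A -> exists N, A `<=` `I_N.
Proof.
move=> /finite_fsetP [X ->].
have : exists N, forall x, x \in (X : seq nat) -> x < N.
  elim: (X : seq nat) => [|a s [N HN]]; first by exists 0.
  exists (maxn a.+1 N) => x; rewrite inE => /orP [/eqP ->| /HN]; lia.
by move=> [N HN]; exists N => x /= xX; apply: HN.
Qed.

Lemma free_cofin p N : free_ultrafilter p -> p [set n | N <= n].
Proof.
move=> [hp nprin]; case: (uf_C hp [set n | N <= n]) => // h; exfalso.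
have h2 : ~` [set n | N <= n] `<=` `I_N.
  by move=> n /= nn; rewrite /= in nn; lia.
have [k [_ pk]] := ufin hp h h2.
by apply: nprin; exists k.
Qed.

Lemma subbasic_open X S : vietoris_subbasic X S -> vietoris_open X S.
Proof.
move=> HS; split.
  by case: HS => A [_ [->|->]] F [].
move=> F SF; exists 1, (fun _ => S); split => //.
by move=> G _ /(_ 0 isT).
Qed.

Lemma plim_sub X p Fs F S : CL_plim X p Fs F -> vietoris_subbasic X S -> S F ->
  p [set n | S (Fs n)].
Proof.
move=> [_ H] HS SF; apply: H; exists S; split; first exact: subbasic_open.
by split.
Qed.

Lemma uf_big p (P : nat -> set nat) : ultrafilter_on_nat p -> forall k,
  (forall i, i < k -> p (P i)) -> p [set n | forall i, i < k -> P i n].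
Proof.
move=> hp; elim => [|k IH] H.
  by apply: (uf_S hp _ (uf_T hp)).
have h1 := IH (fun i ik => H i (ltnW ik)).
have h2 := H k (ltnSn k).
apply: (uf_S hp _ (uf_I hp h1 h2)) => n [/= a b] i; rewrite ltnS leq_eqVlt.
by case/orP => [/eqP -> | /a].
Qed.

Lemma plim_of_sub X p Fs F : ultrafilter_on_nat p -> CL X F ->
  (forall n, CL X (Fs n)) ->
  (forall S, vietoris_subbasic X S -> S F -> p [set n | S (Fs n)]) ->
  CL_plim X p Fs F.
Proof.
move=> hp CLF CLn H; split => // N [O [[OCL Oop] [OF ON]]].
have [k [Ss [HSs HG]]] := Oop F OF.
have := uf_big hp (fun i ik => H _ (HSs i ik).1 (HSs i ik).2).
by apply: (uf_S hp) => n /= Hn; apply: ON; apply: HG.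
Qed.

Section Main.
Variable X : set (set (set nat)).
Hypothesis HXw : forall n : nat, X (pu n).
Hypothesis HXb : X `<=` BW.
Variable p : set (set nat).
Hypothesis hp : ultrafilter_on_nat p.
Variable C : nat -> set nat.
Hypothesis HCne : forall n, C n !=set0.
Hypothesis HCfin : forall n, finite_set (C n).
Hypothesis HCdisj : forall m n, m <> n -> C m `&` C n = set0.

Lemma as_bw_CL n : CL X (as_bw (C n)).
Proof.
split; last by have [k Ck] := HCne n; exists (pu k); exists k.
split; first by move=> x [k [_ ->]].
exists (BW `\` as_bw (C n)); split.
  split; first by move=> U [].
  move=> U [UBW Unot]; exists (~` C n); split.
    case: (uf_C UBW (C n)) => // UC; exfalso.
    have [N HN] := finite_bound (HCfin n).
    have [k [Ck Uk]] := ufin UBW UC HN.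
    by apply: Unot; exists k.
  move=> V VBW VC; split => // [[k [Ck Vk]]].
  by move: VC; rewrite Vk.
apply/seteqP; split => x.
  by move=> [Xx nx]; split => //; split => //; apply: HXb.
by move=> [[_ nx] Xx].
Qed.

Lemma closure_CL (Z : set (set (set nat))) : closed_in X (closure_in X Z).
Proof.
split; first by move=> x [].
exists (BW `\` bw_closure Z); split.
  split; first by move=> U [].
  move=> U [UBW Ucl].
  case: (pselect (exists O0, bw_open O0 /\ O0 U /\ ~ (exists z, Z z /\ O0 z))).
    move=> [O0 [O0op [OU nz]]].
    have [A [UA HA]] := O0op.2 U OU.
    exists A; split => // V VBW VA; split => // [[_ Vcl]].
    by apply: nz; apply: Vcl => //; apply: HA.
  move=> H; exfalso; apply: Ucl; split => // O' op' O'U.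
  case: (pselect (exists z, Z z /\ O' z)) => // nz; exfalso.
  by apply: H; exists O'.
apply/seteqP; split => x.
  move=> [Xx nx]; split => //; split; first exact: HXb.
  by move=> c; apply: nx; split.
by move=> [[_ nc] Xx]; split => // -[c _].
Qed.

Let Cs := fun n => as_bw (C n).

Lemma g_unique g m n : (forall n, C n (g n)) -> C n (g m) -> m = n.
Proof.
move=> Cg Cn; case: (pselect (m = n)) => // mn; exfalso.
have := HCdisj mn; rewrite -subset0 => /(_ (g m)); apply; split => //.
Qed.

Lemma L13 : (exists F, CL_plim X p Cs F) -> Zp p C `<=` X.
Proof.
move=> [F HF] z /(ZpP _ _ hp) [g [Cg ->]].
have [[[FX FXop] Fne] _] := HF.
case: (pselect (X (ghat p g))) => // nX; exfalso.
pose R := [set k | exists n, g n = k].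
pose U := star (~` R) `&` X.
have Uop : open_in X U by exists (star (~` R)); split => //; exact: star_open.
have FU : F `<=` U.
  move=> x Fx; have Xx := FX x Fx; have xBW := HXb Xx.
  split => //; split => //.
  case: (uf_C xBW R) => // xR; exfalso; apply: nX.
  suff -> : ghat p g = x by [].
  apply/esym/uf_eq => //; first exact: ghat_BW.
  move=> A xA; have xAR := uf_I xBW xA xR.
  pose S := vminus X (star (A `&` R) `&` X).
  have HS : vietoris_subbasic X S.
    exists (star (A `&` R) `&` X); split; last by right.
    by exists (star (A `&` R)); split => //; exact: star_open.
  have SF : S F by split; [split|exists x].
  have := plim_sub HF HS SF; apply: (uf_S hp) => n [_ [y [[k [Ck ->]] [[_ [Ak [m gm]]] _]]]].
  rewrite /=; rewrite -gm in Ak Ck.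
  by rewrite -(g_unique Cg Ck).
pose S := vplus X U.
have HS : vietoris_subbasic X S by exists U; split => //; left.
have SF : S F by split; [split|].
have := plim_sub HF HS SF => h.
apply: (uf_0 hp); apply: (uf_S hp _ h) => n [_ sub].
have := sub (pu (g n)) (ex_intro _ (g n) (conj (Cg n) erefl)).
by move=> [[_ /= nR] _]; apply: nR; exists n.
Qed.

Lemma Z_sub_cl : Zp p C `<=` X -> Zp p C `<=` closure_in X (Zp p C).
Proof.
move=> ZX z Zz; rewrite /closure_in /bw_closure; split; last exact: ZX.
split.
  by have [g [_ ->]] := (ZpP _ _ hp).1 Zz; apply: ghat_BW.
by move=> O _ Oz; exists z.
Qed.

Lemma L32 : Zp p C `<=` X -> CL_plim X p Cs (closure_in X (Zp p C)).
Proof.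
move=> ZX.
have [g0 Cg0] := choice HCne.
have Zg0 : Zp p C (ghat p g0) by apply/(ZpP _ _ hp); exists g0.
apply: plim_of_sub => //.
- split; first exact: closure_CL.
  by exists (ghat p g0); apply: Z_sub_cl.
- by move=> n; apply: as_bw_CL.
move=> S [A [[O [[_ Oop] ->]] [->|->]]].
- move=> [CLF FA].
  suff h : p [set n | forall k, C n k -> O (pu k)].
    apply: (uf_S hp _ h) => n /= H; split; first exact: as_bw_CL.
    by move=> y [k [Ck ->]]; split; [apply: H|apply: HXw].
  case: (uf_C hp [set n | forall k, C n k -> O (pu k)]) => // hD; exfalso.
  have [g Cg] : {g & forall n, C n (g n) /\
      (~ (forall k, C n k -> O (pu k)) -> ~ O (pu (g n)))}.
    apply: (@choice _ _ (fun n j => C n j /\ (~ (forall k, C n k -> O (pu k)) -> ~ O (pu j)))) => n.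
    case: (pselect (forall k, C n k -> O (pu k))) => h.
      by have [k Ck] := HCne n; exists k; split.
    move/existsNP: h => [k /not_implyP [Ck nO]].
    by exists k; split.
  have Zg : Zp p C (ghat p g) by apply/(ZpP _ _ hp); exists g; split => // n; case: (Cg n).
  have [Og _] := FA _ (Z_sub_cl ZX Zg).
  have [B [gB HB]] := Oop _ Og.
  have [n [Bn Dn]] := uf_ne hp (uf_I hp gB hD).
  by apply: ((Cg n).2 Dn); apply: HB => //; apply: pu_BW.
- move=> [CLF [x [[[xBW xcl] Xx] [Ox _]]]].
  have [B [xB HB]] := Oop _ Ox.
  have [z [Zz [_ zB]]] := xcl (star B) (star_open B) (conj xBW xB).
  have [g [Cg zg]] := (ZpP _ _ hp).1 Zz.
  rewrite zg in zB.
  apply: (uf_S hp _ zB) => n /= Bn; split; first exact: as_bw_CL.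
  exists (pu (g n)); split; first by exists (g n).
  by split; [apply: HB => //; apply: pu_BW|apply: HXw].
Qed.

End Main.

Definition code (x : set nat) : nat -> nat :=
  fix c j := match j with 0 => 0 | j'.+1 => 2 * c j' + nat_of_bool `[< x j' >] end.

Lemma code_lt x j : code x j < 2 ^ j.
Proof.
elim: j => [|j IH] //=; rewrite expnS; case: (asboolP (x j)) => _; lia.
Qed.

Lemma code_inj x y j : code x j = code y j -> forall i, i < j -> (x i <-> y i).
Proof.
elim: j => [|j IH] //= h i; rewrite ltnS leq_eqVlt => /orP [/eqP ->|ij].
  move: h; case: (asboolP (x j)) => a; case: (asboolP (y j)) => b h //; lia.
apply: IH => //; move: h; case: (asboolP (x j)) => a; case: (asboolP (y j)) => b h; lia.
Qed.

Section Card.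
Variable C : nat -> set nat.
Hypothesis HCne : forall n, C n !=set0.

Fixpoint mf (n j : nat) : nat :=
  match j with 0 => 0 | j'.+1 => if `I_(2 ^ j') #<= C n then j' else mf n j' end.

Lemma I1_le n : `I_1 #<= C n.
Proof.
have [k Ck] := HCne n.
apply/pcard_leP/injfunPex; exists (fun _ => k) => //.
by move=> a b /set_mem /= a0 /set_mem /= b0 _; lia.
Qed.

Lemma mf_ok n j : `I_(2 ^ mf n j) #<= C n.
Proof.
elim: j => [|j IH] /=; first exact: I1_le.
by case: ifP.
Qed.

Lemma mf_ge n j i : i < j -> `I_(2 ^ i) #<= C n -> i <= mf n j.
Proof.
elim: j => [|j IH] //= ij hi.
case: ifP => h; first by rewrite -ltnS.
move: ij; rewrite ltnS leq_eqVlt => /orP [/eqP ie|ij]; last exact: IH.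
by move: h; rewrite -ie hi.
Qed.
End Card.

Section Card2.
Variable p : set (set nat).
Hypothesis Hfree : free_ultrafilter p.
Variable C : nat -> set nat.
Hypothesis HCne : forall n, C n !=set0.
Hypothesis HCdisj : forall m n, m <> n -> C m `&` C n = set0.

Let hp : ultrafilter_on_nat p := Hfree.1.

Definition Gof (y : set (set nat)) : nat -> nat :=
  match pselect (exists g, (forall n, C n (g n)) /\ y = ghat p g) with
  | left h => proj1_sig (cid h)
  | right _ => fun _ => 0
  end.

Lemma Gof_spec y : Zp p C y -> (forall n, C n (Gof y n)) /\ y = ghat p (Gof y).
Proof.
move=> /(ZpP _ _ hp) h; rewrite /Gof; case: pselect => // h'.
exact: (proj2_sig (cid h')).
Qed.

Lemma Zp_le : Zp p C #<= [set: set nat].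
Proof.
apply/pcard_injP.
exists (fun y => [set m | exists n, m = choice.pickle (n, Gof y n)]).
move=> y1 y2 /set_mem Z1 /set_mem Z2 e.
have [_ e1] := Gof_spec Z1; have [_ e2] := Gof_spec Z2.
suff eG : Gof y1 = Gof y2 by rewrite e1 e2 eG.
apply/funext => n.
have : [set m | exists n, m = choice.pickle (n, Gof y1 n)] (choice.pickle (n, Gof y1 n)) by exists n.
rewrite e => -[n' /(pcan_inj choice.pickleK_inv) [-> ->]] //.
Qed.

Hypothesis HI : forall k, exists N, forall n, (N <= n)%N -> `I_k #<= C n.

Let m n := mf C n n.+1.

Lemma le_Zp : [set: set nat] #<= Zp p C.
Proof.
have [F HF] : {F : nat -> nat -> nat & forall n,
    set_fun `I_(2 ^ m n) (C n) (F n) /\ set_inj `I_(2 ^ m n) (F n)}.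
  apply: (@choice _ _ (fun n f => set_fun `I_(2 ^ m n) (C n) f /\ set_inj `I_(2 ^ m n) f)).
  move=> n; have /pcard_leP/injfunPex [f f1 f2] := mf_ok HCne n n.+1.
  by exists f.
pose g x n := F n (code x (m n)).
have Cg x n : C n (g x n).
  by apply: (HF n).1; apply: code_lt.
apply/pcard_leP/injfunPex; exists (fun x => ghat p (g x)).
  by move=> x _; apply/(ZpP _ _ hp); exists (g x).
move=> x y _ _ e.
case: (pselect (exists i, ~ (x i <-> y i))); last first.
  move=> h; apply/funext => i; apply/propext.
  by case: (pselect (x i <-> y i)) => // hi; exfalso; apply: h; exists i.
move=> [i ni]; exfalso.
have [N HN] := HI (2 ^ i.+1).
pose D := [set n | g x n <> g y n].
have pD : p D.
  apply: (uf_S hp _ (free_cofin (maxn N i.+1) Hfree)) => n /= hn egn.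
  have im : i.+1 <= m n.
    apply: mf_ge; first lia.
    by apply: HN; lia.
  have := (HF n).2 _ _ _ _ egn.
  move=> /(_ (mem_set (code_lt _ _)) (mem_set (code_lt _ _))) hc.
  by apply: ni; apply: (code_inj hc); lia.
pose A := [set k | exists n, D n /\ g x n = k].
have gxA : ghat p (g x) A by apply: (uf_S hp _ pD) => n Dn; exists n.
rewrite e in gxA.
apply: (uf_0 hp); apply: (uf_S hp _ gxA) => n /= [n' [Dn' eq]].
have nn : n' = n.
  case: (pselect (n' = n)) => // ne; exfalso.
  have := HCdisj ne; rewrite -subset0 => /(_ (g y n)); apply; split => //.
  by rewrite -eq.
by apply: Dn'; rewrite eq nn.
Qed.

End Card2.

Unset Implicit Arguments.

Theorem lemma2p1
  (X : set (set (set nat)))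
  (HXw : forall n : nat, X (pu n))
  (HXb : X `<=` BW)
  (p : set (set nat))
  (Hp : free_ultrafilter p)
  (C : nat -> set nat)
  (HCne : forall n, C n !=set0)
  (HCfin : forall n, finite_set (C n))
  (HCdisj : forall m n, m <> n -> C m `&` C n = set0) :
  ((exists F, CL_plim X p (fun n => as_bw (C n)) F) <->
     CL_plim X p (fun n => as_bw (C n)) (closure_in X (Zp p C))) /\
  (CL_plim X p (fun n => as_bw (C n)) (closure_in X (Zp p C)) <->
     Zp p C `<=` X) /\
  ((forall n, C n #<= C n.+1) ->
   (forall k, exists N, forall n, (N <= n)%N -> `I_k #<= C n) ->
   Zp p C #= [set: set nat]).
Proof.
have hp := Hp.1.
have l13 := L13 HXb hp HCdisj.
have l32 := L32 HXw HXb hp HCne HCfin.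
split; [split|split; [split|]].
- by move=> h; apply: l32; apply: l13.
- by move=> h; exists (closure_in X (Zp p C)).
- by move=> h; apply: l13; exists (closure_in X (Zp p C)).
- exact: l32.
- move=> _ HI; apply/card_eqPle; split.
  + exact: Zp_le.
  + exact: le_Zp.
Qed.
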